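(* Let $A$ and $B$ be connected graded $k$-algebras generated in degree $1$. Suppose that $d=\dim_k A_1<\infty$ and that $A_{\ge1}$ is the unique codimension $1$ ideal of $A$ with tangent dimension $d$. If $A\cong B$ as ungraded algebras, then $A\cong B$ as graded algebras.
   Context: A connected graded algebra satisfies $A_0=k$, and $A_{\ge1}=\bigoplus_{i\ge1}A_i$. A codimension $1$ ideal of tangent dimension $s$ in an algebra $R$ is a two-sided ideal $I$ with $\dim_k R/I=1$ and $\dim_k I/I^2=s$. *)

(* Defs.v *)
(* Algebras over a field k are MathComp [algType k]
   (associative, unital); gradings and quotient dimensions are defined
   literally since the algebras may be infinite dimensional. *)
From HB Require Import structures.
From mathcomp Require Import all_boot all_order all_algebra.
Set Implicit Arguments. Unset Strict Implicit. Unset Printing Implicit Defensive.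
Import GRing.Theory.
Local Open Scope ring_scope.

Section Defs.
Variables (k : fieldType) (A : algType k).

Definition subspace (P : A -> Prop) : Prop :=
  P 0 /\ (forall (a : k) x y, P x -> P y -> P (a *: x + y)).

Definition two_sided_ideal (I : A -> Prop) : Prop :=
  subspace I /\ (forall a x, I x -> I (a * x)) /\ (forall a x, I x -> I (x * a)).

Definition ideal_sq (I : A -> Prop) : A -> Prop := fun z =>
  exists (n : nat) (f g : nat -> A),
    (forall i, I (f i)) /\ (forall i, I (g i)) /\ z = \sum_(i < n) f i * g i.

(* dim_k P/Q = n  (for subspaces Q <= P): the classes of b_0..b_{n-1}
   form a basis of P/Q. *)
Definition qdim (P Q : A -> Prop) (n : nat) : Prop :=
  exists b : 'I_n -> A,
    (forall i, P (b i)) /\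
    (forall x, P x -> exists c : 'I_n -> k, Q (x - \sum_i c i *: b i)) /\
    (forall c : 'I_n -> k, Q (\sum_i c i *: b i) -> forall i, c i = 0).

Definition sdim (P : A -> Prop) (n : nat) : Prop := qdim P (fun x => x = 0) n.

Definition codim1_ideal_tdim (I : A -> Prop) (s : nat) : Prop :=
  two_sided_ideal I /\ qdim (fun _ => True) I 1 /\ qdim I (ideal_sq I) s.

Definition is_grading (G : nat -> A -> Prop) : Prop :=
  (forall i, subspace (G i)) /\
  (forall i j x y, G i x -> G j y -> G (i + j)%N (x * y)) /\
  (forall x, exists (n : nat) (f : nat -> A),
       (forall i, G i (f i)) /\ x = \sum_(i < n) f i) /\
  (forall (n : nat) (f : nat -> A), (forall i, G i (f i)) ->
       \sum_(i < n) f i = 0 -> forall i, (i < n)%N -> f i = 0).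

Definition connected_graded (G : nat -> A -> Prop) : Prop :=
  is_grading G /\ (forall x, G 0%N x <-> exists c : k, x = c%:A).

Definition generated_in_deg1 (G : nat -> A -> Prop) : Prop :=
  forall S : A -> Prop,
    S 1 -> (forall (a : k) x y, S x -> S y -> S (a *: x + y)) ->
    (forall x y, S x -> S y -> S (x * y)) ->
    (forall x, G 1%N x -> S x) -> forall x, S x.

Definition pos_part (G : nat -> A -> Prop) : A -> Prop := fun x =>
  exists (n : nat) (f : nat -> A),
    (forall i, G i.+1 (f i)) /\ x = \sum_(i < n) f i.

End Defs.

Definition alg_iso (k : fieldType) (A B : algType k) (f : A -> B) : Prop :=
  (forall (a : k) x y, f (a *: x + y) = a *: f x + f y) /\
  (forall x y, f (x * y) = f x * f y) /\ f 1 = 1 /\ bijective f.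

(* Main.v *)
Require Import Defs.
From HB Require Import structures.
From mathcomp Require Import all_boot all_order all_algebra.
From Stdlib Require Import ClassicalEpsilon Classical.
Set Implicit Arguments. Unset Strict Implicit. Unset Printing Implicit Defensive.
Import GRing.Theory.
Local Open Scope ring_scope.

Lemma sum_trunc (V : zmodType) (g : nat -> V) N M :
  (forall i, (N <= i)%N -> g i = 0) -> (N <= M)%N ->
  \sum_(i < M) g i = \sum_(i < N) g i.
Proof.
move=> H NM; rewrite -(subnKC NM) big_split_ord /= [X in _ + X]big1 ?addr0 // => i _.
by apply: H; rewrite leq_addr.
Qed.

Section Sub.
Variables (k : fieldType) (A : algType k).

Lemma sub0 (P : A -> Prop) : subspace P -> P 0.
Proof. by case. Qed.
Lemma subD (P : A -> Prop) x y : subspace P -> P x -> P y -> P (x + y).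
Proof. by case=> _ H Px Py; have := H 1 x y Px Py; rewrite scale1r. Qed.
Lemma subZ (P : A -> Prop) a x : subspace P -> P x -> P (a *: x).
Proof. by case=> H0 H Px; have := H a x 0 Px H0; rewrite addr0. Qed.
Lemma subN (P : A -> Prop) x : subspace P -> P x -> P (- x).
Proof. by move=> sP Px; rewrite -scaleN1r; apply: subZ. Qed.
Lemma subB (P : A -> Prop) x y : subspace P -> P x -> P y -> P (x - y).
Proof. by move=> sP Px Py; apply: subD => //; apply: subN. Qed.
Lemma sub_sum (P : A -> Prop) (I : Type) (r : seq I) (Q : pred I) (F : I -> A) :
  subspace P -> (forall i, Q i -> P (F i)) -> P (\sum_(i <- r | Q i) F i).
Proof.
move=> sP H; apply: (big_ind P) => //; first exact: sub0.
by move=> x y; apply: subD.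
Qed.
Lemma sub_eq (P : A -> Prop) x y : x = y -> P x -> P y.
Proof. by move=> ->. Qed.


Lemma sq_sub (J : A -> Prop) : subspace J -> subspace (ideal_sq J).
Proof.
move=> sJ; split.
  by exists 0%N, (fun _ => 0), (fun _ => 0); split; [|split]; rewrite ?big_ord0 // => _; apply: sub0.
move=> a x y [n [f [g [Jf [Jg ->]]]]] [m [f' [g' [Jf' [Jg' ->]]]]].
exists (n + m)%N, (fun i => if (i < n)%N then a *: f i else f' (i - n)%N),
  (fun i => if (i < n)%N then g i else g' (i - n)%N).
split; last split.
- by move=> i; case: ifP => _ //; apply: subZ.
- by move=> i; case: ifP.
- rewrite big_split_ord /= scaler_sumr; congr (_ + _).
    by apply: eq_bigr => -[i ip] _ /=; rewrite ip scalerAl.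
  by apply: eq_bigr => i _; rewrite ltnNge leq_addr /= addKn.
Qed.


Lemma sq_mul (J : A -> Prop) x y : J x -> J y -> ideal_sq J (x * y).
Proof.
move=> Jx Jy; exists 1%N, (fun _ => x), (fun _ => y).
by split => //; split => //; rewrite big_ord1.
Qed.

Lemma tsi_sub (J : A -> Prop) : two_sided_ideal J -> subspace J.
Proof. by case. Qed.
Lemma tsi_l (J : A -> Prop) a x : two_sided_ideal J -> J x -> J (a * x).
Proof. by case=> _ [H _]; apply: H. Qed.
Lemma tsi_r (J : A -> Prop) a x : two_sided_ideal J -> J x -> J (x * a).
Proof. by case=> _ [_ H]; apply: H. Qed.

Lemma sq_in (J : A -> Prop) x : two_sided_ideal J -> ideal_sq J x -> J x.
Proof.
move=> tJ [n [f [g [Jf [Jg ->]]]]]; apply: sub_sum => [|i _].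
  exact: tsi_sub.
exact: tsi_r.
Qed.

Lemma codim1_spec (J : A -> Prop) : two_sided_ideal J -> qdim (fun _ => True) J 1 ->
  (forall x, exists c, J (x - c *: 1)) /\ (forall c, J (c *: 1) -> c = 0).
Proof.
move=> tJ [b [_ [Hs Hi]]]; have sJ := tsi_sub tJ.
set b0 := b ord0.
have Es : forall x, exists c, J (x - c *: b0).
  move=> x; have [c Hc] := Hs x I; exists (c ord0).
  by rewrite big_ord1 in Hc.
have Ei : forall c, J (c *: b0) -> c = 0.
  move=> c Jc; have := Hi (fun _ => c); rewrite big_ord1; move=> /(_ Jc ord0) //.
have [c1 Hc1] := Es 1.
have c1n0 : c1 != 0.
  apply/eqP => c10; move: Hc1; rewrite c10 scale0r subr0 => J1.
  have : J (1 *: b0) by rewrite scale1r -[b0]mul1r; apply: tsi_r.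
  by move/Ei/eqP; rewrite oner_eq0.
have Eb : b0 = c1^-1 *: 1 - c1^-1 *: (1 - c1 *: b0).
  by rewrite scalerBr opprB scalerA mulVf // scale1r addrC subrK.
split.
  move=> x; have [c Hc] := Es x; exists (c * c1^-1).
  have -> : x - (c * c1^-1) *: 1 = (x - c *: b0) + (- (c * c1^-1)) *: (1 - c1 *: b0).
    rewrite scalerBr scalerA mulNr -mulrA mulVf // mulr1 !scaleNr opprK.
    by rewrite [- _ + _]addrC addrA subrK.
  by apply: subD => //; apply: subZ.
move=> c Jc; have: J ((c * c1) *: b0).
  have -> : (c * c1) *: b0 = c *: 1 - c *: (1 - c1 *: b0).
    by rewrite scalerBr opprB scalerA addrC subrK.
  by apply: subB => //; apply: subZ.
by move/Ei/eqP; rewrite mulf_eq0 (negbTE c1n0) orbF => /eqP.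
Qed.


Lemma lin_comb a (x u y v : A) : a *: (x - u) + (y - v) = (a *: x + y) - (a *: u + v).
Proof. by rewrite scalerBr opprD addrACA. Qed.
Lemma scal1 a c e : (a * c + e) *: (1 : A) = a *: (c *: 1) + e *: 1.
Proof. by rewrite scalerDl scalerA. Qed.
Lemma prod_id a b (u v : A) :
  (u + a *: 1) * (v + b *: 1) - (a * b) *: 1 = a *: v + b *: u + u * v.
Proof.
rewrite mulrDl !mulrDr -scalerAl mul1r -scalerAr mulr1 -scalerAl mul1r scalerA.
by rewrite addrA addrK addrC [u * v + _]addrC addrA.
Qed.

End Sub.
Section Graded.
Variables (k : fieldType) (A : algType k) (G : nat -> A -> Prop).
Hypothesis HG : connected_graded G.

Let Hgr : is_grading G := proj1 HG.
Lemma Gsub i : subspace (G i). Proof. by case: Hgr. Qed.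
Lemma Gmul i j x y : G i x -> G j y -> G (i + j)%N (x * y).
Proof. by case: Hgr => _ [H _]; apply: H. Qed.
Lemma G0 i : G i 0. Proof. exact: sub0 (Gsub i). Qed.
Lemma G1one : G 0 1.
Proof. by apply/(proj2 HG); exists 1; rewrite scale1r. Qed.

Definition decomp (x : A) (g : nat -> A) :=
  (forall i, G i (g i)) /\ exists N, (forall i, (N <= i)%N -> g i = 0) /\ x = \sum_(i < N) g i.

Lemma decomp_ex x : exists g, decomp x g.
Proof.
case: Hgr => _ [_ [H _]]; have [n [f [Gf ->]]] := H x.
exists (fun i => if (i < n)%N then f i else 0); split.
  by move=> i; case: ifP => _ //; apply: G0.
exists n; split; first by move=> i; rewrite leqNgt => /negbTE ->.
by apply: eq_bigr => i _; rewrite ltn_ord.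
Qed.

Lemma indep0 (h : nat -> A) N : (forall i, G i (h i)) -> \sum_(i < N) h i = 0 ->
  forall i, (i < N)%N -> h i = 0.
Proof. by case: Hgr => _ [_ [_ H]]; apply: H. Qed.

Lemma decomp_uniq x g g' : decomp x g -> decomp x g' -> forall i, g i = g' i.
Proof.
move=> [Gg [N [Ng ->]]] [Gg' [N' [Ng' E]]] i.
set M := maxn N N'.
have E1 : \sum_(i < M) g i = \sum_(i < N) g i by apply: sum_trunc; rewrite ?leq_maxl.
have E2 : \sum_(i < M) g' i = \sum_(i < N') g' i by apply: sum_trunc; rewrite ?leq_maxr.
have S0 : \sum_(i < M) (g i - g' i) = 0 by rewrite sumrB E1 E2 E subrr.
case: (ltnP i M) => iM.
  apply/eqP; rewrite -subr_eq0; apply/eqP; apply: (@indep0 (fun j => g j - g' j) M _ S0) => // j.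
  by apply: subB; [apply: Gsub | |].
by rewrite Ng ?Ng' //; apply: leq_trans iM; rewrite ?leq_maxl ?leq_maxr.
Qed.

Definition pi (x : A) : nat -> A :=
  proj1_sig (constructive_indefinite_description _ (decomp_ex x)).

Lemma pi_spec x : decomp x (pi x).
Proof. exact: proj2_sig (constructive_indefinite_description _ (decomp_ex x)). Qed.

Lemma piG x i : G i (pi x i). Proof. by case: (pi_spec x). Qed.

Lemma pi_eq x g : decomp x g -> forall i, pi x i = g i.
Proof. by move=> dg; apply: decomp_uniq; [apply: pi_spec|]. Qed.

Lemma bound_ex x : exists N, forall i, (N <= i)%N -> pi x i = 0.
Proof. by case: (pi_spec x) => _ [N [H _]]; exists N. Qed.

Lemma pi_sum x N : (forall i, (N <= i)%N -> pi x i = 0) -> x = \sum_(i < N) pi x i.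
Proof.
move=> HN; case: (pi_spec x) => _ [N0 [H0 E]].
rewrite -(sum_trunc HN (leq_maxl N N0)) (sum_trunc H0 (leq_maxr N N0)) //.
Qed.

Lemma pi_lin a x y i : pi (a *: x + y) i = a *: pi x i + pi y i.
Proof.
apply: (@pi_eq _ (fun j => a *: pi x j + pi y j)); split.
  by move=> j; case: (Gsub j) => _ H; apply: H; apply: piG.
have [N1 H1] := bound_ex x; have [N2 H2] := bound_ex y.
exists (maxn N1 N2); split.
  move=> j; rewrite geq_max => /andP[j1 j2]; by rewrite H1 // H2 // scaler0 addr0.
rewrite big_split /= -scaler_sumr -!pi_sum // => j Hj; [apply: H2|apply: H1];
  by apply: leq_trans Hj; rewrite ?leq_maxl ?leq_maxr.
Qed.

Lemma pi0 i : pi 0 i = 0.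
Proof.
apply: (@pi_eq _ (fun _ => 0)); split; first by move=> j; apply: G0.
by exists 0%N; split => //; rewrite big_ord0.
Qed.

Lemma piD x y i : pi (x + y) i = pi x i + pi y i.
Proof. by have := pi_lin 1 x y i; rewrite !scale1r. Qed.
Lemma piZ a x i : pi (a *: x) i = a *: pi x i.
Proof. by have := pi_lin a x 0 i; rewrite !addr0 pi0 addr0. Qed.

Lemma piN x i : pi (- x) i = - pi x i.
Proof. by rewrite -scaleN1r piZ scaleN1r. Qed.
Lemma piB x y i : pi (x - y) i = pi x i - pi y i.
Proof. by rewrite piD piN. Qed.

Lemma pi_big (I : Type) (r : seq I) (P : pred I) (F : I -> A) i :
  pi (\sum_(j <- r | P j) F j) i = \sum_(j <- r | P j) pi (F j) i.
Proof.
apply: (big_morph (fun x => pi x i)); first by move=> x y; apply: piD.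
exact: pi0.
Qed.

Lemma pi_hom m x : G m x -> forall i, pi x i = if i == m then x else 0.
Proof.
move=> Gx; apply: pi_eq; split.
  by move=> j; case: eqP => [->|_] //; apply: G0.
exists m.+1; split; first by move=> j; case: eqP => // ->; rewrite ltnn.
rewrite big_ord_recr /= eqxx big1 ?add0r // => j _.
by rewrite eqn_leq [(m <= _)%N]leqNgt ltn_ord andbF.
Qed.

Lemma pi_homm m x : G m x -> pi x m = x.
Proof. by move/pi_hom => ->; rewrite eqxx. Qed.
Lemma pi_homo m x i : G m x -> i != m -> pi x i = 0.
Proof. by move/pi_hom => -> /negbTE ->. Qed.

Lemma G_pi m x : G m x <-> forall i, i != m -> pi x i = 0.
Proof.
split; first by move=> Gx i; apply: pi_homo.
move=> H; have [N HN] := bound_ex x.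
rewrite (@pi_sum x (maxn N m.+1)); last first.
  by move=> i; rewrite geq_max => /andP[/HN].
rewrite (bigD1 (Ordinal (leq_trans (ltnSn m) (leq_maxr N m.+1)))) //= big1 ?addr0.
  exact: piG.
by move=> j /eqP jm; apply: H; apply/eqP => E; apply: jm; apply: val_inj.
Qed.

Lemma pi_one i : pi 1 i = if i == 0%N then 1 else 0.
Proof. exact: pi_hom G1one i. Qed.

Definition F (n : nat) (x : A) := forall i, (i < n)%N -> pi x i = 0.

Lemma Fsub n : subspace (F n).
Proof.
split; first by move=> i _; apply: pi0.
by move=> a x y Fx Fy i iN; rewrite pi_lin Fx // Fy // scaler0 addr0.
Qed.

Lemma GF m n x : (n <= m)%N -> G m x -> F n x.
Proof. move=> nm Gx i iN; apply: pi_homo Gx _; by rewrite neq_ltn (leq_trans iN nm). Qed.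

Lemma F0 x : F 0 x. Proof. by []. Qed.

Lemma Fmul a b x y : F a x -> F b y -> F (a + b) (x * y).
Proof.
move=> Fx Fy; have [N1 H1] := bound_ex x; have [N2 H2] := bound_ex y.
rewrite (pi_sum H1) (pi_sum H2) mulr_suml.
apply: sub_sum => [|i _]; first exact: Fsub.
rewrite mulr_sumr; apply: sub_sum => [|j _]; first exact: Fsub.
case: (ltnP i a) => ia; first by rewrite Fx // mul0r; apply: sub0 (Fsub _).
case: (ltnP j b) => jb; first by rewrite Fy // mulr0; apply: sub0 (Fsub _).
by apply: (GF (m := (i + j)%N)); [apply: leq_add|apply: Gmul; apply: piG].
Qed.

Lemma Ftail n x : F n x -> F n.+1 (x - pi x n).
Proof.
move=> Fx i; rewrite ltnS leq_eqVlt => /orP[/eqP ->|iN].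
  by rewrite piB (pi_homm (piG x n)) subrr.
by rewrite piB Fx // (pi_homo (piG x n)) ?subrr // neq_ltn iN.
Qed.

Lemma pi_mulF i j x y : F i x -> F j y -> pi (x * y) (i + j) = pi x i * pi y j.
Proof.
move=> Fx Fy.
have -> : x * y = pi x i * pi y j + (pi x i * (y - pi y j) + (x - pi x i) * y).
  by rewrite mulrBr mulrBl addrA [pi x i * pi y j + _]addrC subrK addrC subrK.
rewrite piD piD (pi_homm (Gmul (piG x i) (piG y j))).
have F1 : F (i + j).+1 (pi x i * (y - pi y j)).
  by rewrite -addnS; apply: Fmul; [apply: GF (piG x i)|apply: Ftail].
have F2 : F (i + j).+1 ((x - pi x i) * y).
  by rewrite -addSn; apply: Fmul => //; apply: Ftail.
by rewrite F1 // F2 // !addr0.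
Qed.

Lemma pi_mul x y m N : (forall i, (N <= i)%N -> pi x i = 0) ->
  (forall i, (N <= i)%N -> pi y i = 0) ->
  pi (x * y) m = \sum_(i < N) \sum_(j < N) (if (i + j == m)%N then pi x i * pi y j else 0).
Proof.
move=> Hx Hy; rewrite {1}(pi_sum Hx) {1}(pi_sum Hy) mulr_suml pi_big.
apply: eq_bigr => i _; rewrite mulr_sumr pi_big; apply: eq_bigr => j _.
by rewrite (pi_hom (Gmul (piG x i) (piG y j))) eq_sym.
Qed.

Lemma pos_partE x : pos_part G x <-> F 1 x.
Proof.
split.
  move=> [n [f [Gf ->]]] i; rewrite ltnS leqn0 => /eqP ->.
  rewrite pi_big big1 // => j _; exact: pi_homo (Gf j) _.
move=> Fx; have [N HN] := bound_ex x.
exists N, (fun i => pi x i.+1); split; first by move=> i; apply: piG.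
rewrite {1}(@pi_sum x N.+1); last by move=> i iN; apply: HN; apply: ltnW.
by rewrite big_ord_recl Fx // add0r.
Qed.

Hypothesis Hgen : generated_in_deg1 G.

Lemma tangent_span (J : A -> Prop) : two_sided_ideal J ->
  (forall x, exists c, J (x - c *: 1)) -> (forall c, J (c *: 1) -> c = 0) ->
  forall x, J x -> exists z e, G 1 z /\ J (z - e *: 1) /\ ideal_sq J (x - (z - e *: 1)).
Proof.
move=> tJ Hs Hi.
have sJ := tsi_sub tJ; have sq := sq_sub sJ.
pose W w := exists z e, G 1 z /\ J (z - e *: 1) /\ w = z - e *: 1.
pose S x := exists c w, W w /\ J (x - c *: 1) /\ ideal_sq J (x - c *: 1 - w).
have H : forall x, S x.
  apply: Hgen.
  - exists 1, 0; split; first by exists 0, 0; rewrite scale0r subr0; split; [apply: G0|split => //; apply: sub0].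
    by rewrite scale1r subrr subr0; split; apply: sub0.
  - move=> a x y [cx [wx [[zx [ex [Gzx [Jzx ->]]]] [Jx Sx]]]] [cy [wy [[zy [ey [Gzy [Jzy ->]]]] [Jy Sy]]]].
    exists (a * cx + cy), (a *: (zx - ex *: 1) + (zy - ey *: 1)); split; last split.
    + exists (a *: zx + zy), (a * ex + ey); split; first by case: (Gsub 1) => _; apply.
      by rewrite scal1 -lin_comb; split => //; apply: (subD sJ) => //; apply: (subZ _ sJ).
    + by rewrite scal1 -lin_comb; apply: (subD sJ) => //; apply: (subZ _ sJ).
    + rewrite scal1 -lin_comb -lin_comb; apply: (subD sq) => //; exact: (subZ _ sq).
  - move=> x y [cx [wx [[zx [ex [Gzx [Jzx ->]]]] [Jx Sx]]]] [cy [wy [[zy [ey [Gzy [Jzy ->]]]] [Jy Sy]]]].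
    set u := x - cx *: 1 in Jx Sx; set v := y - cy *: 1 in Jy Sy.
    have Exy : x * y - (cx * cy) *: 1 = cx *: v + cy *: u + u * v.
      by rewrite -prod_id /u /v !subrK.
    exists (cx * cy), (cx *: (zy - ey *: 1) + cy *: (zx - ex *: 1)); split; last split.
    + exists (cx *: zy + cy *: zx), (cx * ey + cy * ex); split.
        by case: (Gsub 1) => _; apply => //; apply: (subZ _ (Gsub 1)).
      rewrite scal1 -scalerA -lin_comb -scalerBr; split => //.
      by apply: (subD sJ); apply: (subZ _ sJ).
    + by rewrite Exy; apply: (subD sJ); [apply: (subD sJ); apply: (subZ _ sJ)|apply: tsi_r].
    + rewrite Exy addrAC; apply: (subD sq); last exact: sq_mul.
      rewrite -[cy *: u]scale1r.
      have -> : cx *: (zy - ey *: 1) + cy *: (zx - ex *: 1) = cx *: (zy - ey *: 1) + 1 *: (cy *: (zx - ex *: 1)) by rewrite scale1r.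
      by rewrite -lin_comb -!scalerBr scale1r; apply: (subD sq); apply: (subZ _ sq).
  - move=> x Gx; have [c Hc] := Hs x; exists c, (x - c *: 1); split.
      by exists x, c.
    by rewrite subrr; split => //; apply: sub0.
move=> x Jx; have [c [w [[z [e [Gz [Jz ->]]]] [Jxc Sx]]]] := H x.
have c0 : c = 0.
  apply: Hi; have -> : c *: 1 = x - (x - c *: 1) by rewrite opprB addrC subrK.
  exact: (subB sJ).
by move: Sx; rewrite c0 scale0r subr0 => Sx; exists z, e.
Qed.

Lemma F1_ideal : two_sided_ideal (F 1).
Proof.
split; first exact: Fsub.
by split=> a x Fx; [move: (Fmul (F0 a) Fx)|move: (Fmul Fx (F0 a)); rewrite addn0].
Qed.

Lemma F1_codim : qdim (fun _ => True) (F 1) 1.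
Proof.
exists (fun _ => 1); split => //; split.
  move=> x _; have [c Hc] := (proj2 HG (pi x 0)).1 (piG x 0).
  exists (fun _ => c); rewrite big_ord1 => i; rewrite ltnS leqn0 => /eqP ->.
  by rewrite piB piZ pi_one eqxx Hc subrr.
move=> c; rewrite big_ord1 => Fc i; rewrite ord1.
have := Fc 0%N isT; rewrite piZ pi_one eqxx => /eqP.
by rewrite scaler_eq0 oner_eq0 orbF => /eqP.
Qed.

Lemma sq_F2 x : ideal_sq (F 1) x -> F 2 x.
Proof.
move=> [n [f [g [Ff [Fg ->]]]]]; apply: sub_sum => [|i _]; first exact: Fsub.
exact: (Fmul (a := 1%N) (b := 1%N)).
Qed.

End Graded.

Section LinAlg.
Variables (k : fieldType) (A : algType k).

Lemma core (P Q : A -> Prop) p m (v : 'I_p -> A) (w : 'I_m -> A) :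
  subspace Q -> (forall j, P (w j)) ->
  (forall x, P x -> exists a : 'I_p -> k, Q (x - \sum_i a i *: v i)) ->
  (p < m)%N ->
  exists a : 'I_m -> k, (exists j, a j != 0) /\ Q (\sum_j a j *: w j).
Proof.
move=> sQ Pw Hs pm.
pose C j := proj1_sig (constructive_indefinite_description _ (Hs (w j) (Pw j))).
have HC j : Q (w j - \sum_i C j i *: v i)
  := proj2_sig (constructive_indefinite_description _ (Hs (w j) (Pw j))).
pose M : 'M[k]_(m, p) := \matrix_(j, i) C j i.
have kn0 : kermx M != 0.
  apply/eqP => k0; have := mxrank_ker M; rewrite k0 mxrank0 => /esym/eqP.
  rewrite subn_eq0 => H; have := leq_trans H (rank_leq_col M).
  by rewrite leqNgt pm.
pose r := nz_row (kermx M).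
have rn0 : r != 0 by rewrite nz_row_eq0.
have rM : r *m M = 0 by apply/eqP; rewrite -sub_kermx nz_row_sub.
exists (fun j => r 0 j); split.
  apply/existsP/negP => /existsP H; apply: (negP rn0); apply/eqP/matrixP => i j.
  rewrite ord1 !mxE; apply/eqP/negP => /negP rj; apply: H; exists j; exact: rj.
have -> : \sum_j r 0 j *: w j =
   \sum_j r 0 j *: (w j - \sum_i C j i *: v i) + \sum_j r 0 j *: \sum_i C j i *: v i.
  by rewrite -big_split /=; apply: eq_bigr => j _; rewrite -scalerDr subrK.
have -> : \sum_j r 0 j *: \sum_i C j i *: v i = 0.
  under eq_bigr => j _ do rewrite scaler_sumr.
  rewrite exchange_big /= big1 // => i _.
  under eq_bigr => j _ do rewrite scalerA.
  rewrite -scaler_suml.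
  have -> : \sum_j r 0 j * C j i = (r *m M) 0 i.
    by rewrite mxE; apply: eq_bigr => j _; rewrite mxE.
  by rewrite rM mxE scale0r.
rewrite addr0; apply: (sub_sum _ sQ) => j _; exact: (subZ _ sQ (HC j)).
Qed.

End LinAlg.

Section Transport.
Variables (k : fieldType) (A B : algType k) (f : A -> B) (g : B -> A).
Hypothesis lf : forall (a : k) x y, f (a *: x + y) = a *: f x + f y.
Hypothesis mf : forall x y, f (x * y) = f x * f y.
Hypothesis f1 : f 1 = 1.
Hypothesis fK : cancel f g.
Hypothesis gK : cancel g f.

Lemma f0 : f 0 = 0.
Proof.
have := lf 1 0 0; rewrite !scale1r addr0 => H.
by apply: (addrI (f 0)); rewrite addr0 -H.
Qed.
Lemma fD x y : f (x + y) = f x + f y.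
Proof. by have := lf 1 x y; rewrite !scale1r. Qed.
Lemma fZ a x : f (a *: x) = a *: f x.
Proof. by have := lf a x 0; rewrite !addr0 f0 addr0. Qed.
Lemma fN x : f (- x) = - f x.
Proof. by rewrite -scaleN1r fZ scaleN1r. Qed.
Lemma fB x y : f (x - y) = f x - f y.
Proof. by rewrite fD fN. Qed.
Lemma f_sum (I : Type) (r : seq I) (P : pred I) (F : I -> A) :
  f (\sum_(i <- r | P i) F i) = \sum_(i <- r | P i) f (F i).
Proof. by apply: (big_morph f fD f0). Qed.

Lemma lg : forall (a : k) x y, g (a *: x + y) = a *: g x + g y.
Proof. by move=> a x y; apply: (can_inj fK); rewrite gK lf !gK. Qed.
Lemma mg : forall x y, g (x * y) = g x * g y.
Proof. by move=> x y; apply: (can_inj fK); rewrite gK mf !gK. Qed.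
Lemma g1 : g 1 = 1.
Proof. by apply: (can_inj fK); rewrite gK f1. Qed.

Lemma tr_tsi (J : B -> Prop) : two_sided_ideal J -> two_sided_ideal (fun x => J (f x)).
Proof.
move=> [[J0 Jl] [Jm Jr]]; split; first by split; [rewrite f0|move=> a x y Jx Jy; rewrite lf; apply: Jl].
by split=> a x Jx; rewrite mf; [apply: Jm|apply: Jr].
Qed.

Lemma tr_sq (J : B -> Prop) x : ideal_sq (fun x => J (f x)) x <-> ideal_sq J (f x).
Proof.
split.
  move=> [n [u [v [Ju [Jv ->]]]]]; exists n, (fun i => f (u i)), (fun i => f (v i)).
  by split => //; split => //; rewrite f_sum; apply: eq_bigr => i _; rewrite mf.
move=> [n [u [v [Ju [Jv E]]]]]; exists n, (fun i => g (u i)), (fun i => g (v i)).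
split; first by move=> i; rewrite gK.
split; first by move=> i; rewrite gK.
apply: (can_inj fK); rewrite f_sum E; apply: eq_bigr => i _; by rewrite mf !gK.
Qed.

Lemma tr_qdim (P Q : B -> Prop) n : qdim P Q n -> qdim (fun x => P (f x)) (fun x => Q (f x)) n.
Proof.
move=> [b [Pb [Hs Hi]]]; exists (fun i => g (b i)); split; first by move=> i; rewrite gK.
split.
  move=> x Px; have [c Hc] := Hs _ Px; exists c.
  by rewrite fB f_sum; under eq_bigr => i _ do rewrite fZ gK.
move=> c; rewrite f_sum; under eq_bigr => i _ do rewrite fZ gK.
exact: Hi.
Qed.

End Transport.

Lemma qdim_ext (k : fieldType) (A : algType k) (P Q Q' : A -> Prop) n :
  (forall x, Q x <-> Q' x) -> qdim P Q n -> qdim P Q' n.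
Proof.
move=> E [b [Pb [Hs Hi]]]; exists b; split => //; split.
  by move=> x Px; have [c Hc] := Hs x Px; exists c; apply/E.
by move=> c /E; apply: Hi.
Qed.

Lemma tr_codim (k : fieldType) (A B : algType k) (f : A -> B) (g : B -> A) :
  (forall (a : k) x y, f (a *: x + y) = a *: f x + f y) ->
  (forall x y, f (x * y) = f x * f y) -> cancel f g -> cancel g f ->
  forall (J : B -> Prop) s, codim1_ideal_tdim J s -> codim1_ideal_tdim (fun x => J (f x)) s.
Proof.
move=> lf mf fK gK J s [tJ [c1 td]]; split; first exact: tr_tsi.
split; first exact: (tr_qdim lf gK c1).
apply: (qdim_ext (Q := fun x => ideal_sq J (f x))).
  by move=> x; split => /(tr_sq lf mf fK gK).
exact: (tr_qdim lf gK td).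
Qed.

Definition bnd (k : fieldType) (A : algType k) (G : nat -> A -> Prop)
  (HG : connected_graded G) (x : A) : nat :=
  proj1_sig (constructive_indefinite_description _ (bound_ex HG x)).

Lemma bndP (k : fieldType) (A : algType k) (G : nat -> A -> Prop)
  (HG : connected_graded G) (x : A) i : (bnd HG x <= i)%N -> pi HG x i = 0.
Proof. move: i; exact: proj2_sig (constructive_indefinite_description _ (bound_ex HG x)). Qed.

Definition grmap (k : fieldType) (A B : algType k) (GA : nat -> A -> Prop) (GB : nat -> B -> Prop)
  (HA : connected_graded GA) (HB : connected_graded GB) (phi : A -> B) (x : A) : B :=
  \sum_(n < bnd HA x) pi HB (phi (pi HA x n)) n.

Section Iso.
Variables (k : fieldType) (A B : algType k) (GA : nat -> A -> Prop) (GB : nat -> B -> Prop).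
Variables (HA : connected_graded GA) (HB : connected_graded GB) (phi : A -> B) (psi : B -> A).
Hypothesis lphi : forall (a : k) x y, phi (a *: x + y) = a *: phi x + phi y.
Hypothesis lpsi : forall (a : k) x y, psi (a *: x + y) = a *: psi x + psi y.
Hypothesis phiK : cancel phi psi.
Hypothesis psiK : cancel psi phi.
Hypothesis mphi : forall n x, F HA n x -> F HB n (phi x).
Hypothesis mpsi : forall n x, F HB n x -> F HA n (psi x).

Let gr := grmap HA HB phi.
Let gr' := grmap HB HA psi.

Lemma phi0 : phi 0 = 0.
Proof. have := lphi 1 0 0; rewrite !scale1r addr0 => H. by apply: (addrI (phi 0)); rewrite addr0 -H. Qed.

Lemma gr_eq x N : (forall i, (N <= i)%N -> pi HA x i = 0) ->
  gr x = \sum_(n < N) pi HB (phi (pi HA x n)) n.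
Proof.
move=> HN; rewrite /gr /grmap.
have Z : forall M, (forall i, (M <= i)%N -> pi HA x i = 0) ->
   forall i, (M <= i)%N -> pi HB (phi (pi HA x i)) i = 0.
  by move=> M HM i iM; rewrite HM // phi0 pi0.
rewrite -(sum_trunc (Z _ (@bndP _ _ _ HA x)) (leq_maxl _ N)).
by rewrite (sum_trunc (Z _ HN) (leq_maxr _ N)).
Qed.

Lemma gr_hom m x : GA m x -> gr x = pi HB (phi x) m.
Proof.
move=> Gx; rewrite (@gr_eq x m.+1); last first.
  by move=> i im; rewrite (pi_homo HA Gx) // neq_ltn im orbT.
rewrite big_ord_recr /= (pi_homm HA Gx) big1 ?add0r // => i _.
by rewrite (pi_homo HA Gx) ?phi0 ?pi0 // neq_ltn ltn_ord.
Qed.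

Lemma gr_lin a x y : gr (a *: x + y) = a *: gr x + gr y.
Proof.
set N := maxn (bnd HA x) (bnd HA y).
have Hx : forall i, (N <= i)%N -> pi HA x i = 0.
  by move=> i; rewrite geq_max => /andP[/bndP].
have Hy : forall i, (N <= i)%N -> pi HA y i = 0.
  by move=> i; rewrite geq_max => /andP[_ /bndP].
rewrite (gr_eq Hx) (gr_eq Hy) (@gr_eq _ N); last first.
  by move=> i iN; rewrite pi_lin Hx // Hy // scaler0 addr0.
rewrite scaler_sumr -big_split; apply: eq_bigr => i _.
by rewrite pi_lin lphi pi_lin.
Qed.

Lemma gr0 : gr 0 = 0.
Proof. by have := gr_lin 1 0 0; rewrite !scale1r addr0 => H; apply: (addrI (gr 0)); rewrite addr0 -H. Qed.
Lemma grD x y : gr (x + y) = gr x + gr y.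
Proof. by have := gr_lin 1 x y; rewrite !scale1r. Qed.

Lemma gr_split x N : (forall i, (N <= i)%N -> pi HA x i = 0) ->
  gr x = \sum_(n < N) gr (pi HA x n).
Proof.
move=> HN; rewrite (gr_eq HN); apply: eq_bigr => i _.
by rewrite (gr_hom (piG HA x i)).
Qed.

Lemma gr_big (I : Type) (r : seq I) (P : pred I) (E : I -> A) :
  gr (\sum_(i <- r | P i) E i) = \sum_(i <- r | P i) gr (E i).
Proof. exact: (big_morph gr grD gr0). Qed.

End Iso.

Section LinF.
Variables (k : fieldType) (A B : algType k) (f : A -> B).
Hypothesis lf : forall (a : k) x y, f (a *: x + y) = a *: f x + f y.
Lemma l0 : f 0 = 0.
Proof. have := lf 1 0 0; rewrite !scale1r addr0 => H. by apply: (addrI (f 0)); rewrite addr0 -H. Qed.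
Lemma lD x y : f (x + y) = f x + f y.
Proof. by have := lf 1 x y; rewrite !scale1r. Qed.
Lemma lZ a x : f (a *: x) = a *: f x.
Proof. by have := lf a x 0; rewrite !addr0 l0 addr0. Qed.
Lemma lB x y : f (x - y) = f x - f y.
Proof. by rewrite lD -scaleN1r lZ scaleN1r. Qed.
Lemma lsum (I : Type) (r : seq I) (P : pred I) (E : I -> A) :
  f (\sum_(i <- r | P i) E i) = \sum_(i <- r | P i) f (E i).
Proof. exact: (big_morph f lD l0). Qed.
End LinF.

Lemma gr_cancel (k : fieldType) (A B : algType k) (GA : nat -> A -> Prop) (GB : nat -> B -> Prop)
  (HA : connected_graded GA) (HB : connected_graded GB) (phi : A -> B) (psi : B -> A) :
  (forall (a : k) x y, phi (a *: x + y) = a *: phi x + phi y) ->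
  (forall (a : k) x y, psi (a *: x + y) = a *: psi x + psi y) ->
  cancel phi psi ->
  (forall n x, F HA n x -> F HB n (phi x)) ->
  (forall n x, F HB n x -> F HA n (psi x)) ->
  cancel (grmap HA HB phi) (grmap HB HA psi).
Proof.
move=> lphi lpsi phiK mphi mpsi.
have Hh : forall m x, GA m x -> grmap HB HA psi (grmap HA HB phi x) = x.
  move=> m x Gx; rewrite (gr_hom HA HB lphi Gx) (gr_hom HB HA lpsi (piG HB _ m)).
  have Fx : F HB m (phi x) by apply: mphi; apply: (GF HA (leqnn m) Gx).
  have Fw := Ftail Fx.
  have -> : pi HB (phi x) m = phi x - (phi x - pi HB (phi x) m) by rewrite opprB addrC subrK.
  by rewrite (lB lpsi) phiK piB (pi_homm HA Gx) (mpsi _ _ Fw m (ltnSn m)) subr0.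
move=> x; have [N HN] := bound_ex HA x.
rewrite (gr_split HB lphi HN) (gr_big HB HA lpsi) [RHS](pi_sum HN).
by apply: eq_bigr => i _; apply: (Hh i); apply: piG.
Qed.

Lemma gr_one (k : fieldType) (A B : algType k) (GA : nat -> A -> Prop) (GB : nat -> B -> Prop)
  (HA : connected_graded GA) (HB : connected_graded GB) (phi : A -> B) :
  (forall (a : k) x y, phi (a *: x + y) = a *: phi x + phi y) -> phi 1 = 1 ->
  grmap HA HB phi 1 = 1.
Proof.
move=> lphi p1; rewrite (gr_hom HA HB lphi (G1one HA)) p1 (pi_homm HB (G1one HB)) //.
Qed.

Lemma gr_mul (k : fieldType) (A B : algType k) (GA : nat -> A -> Prop) (GB : nat -> B -> Prop)
  (HA : connected_graded GA) (HB : connected_graded GB) (phi : A -> B) :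
  (forall (a : k) x y, phi (a *: x + y) = a *: phi x + phi y) ->
  (forall x y, phi (x * y) = phi x * phi y) ->
  (forall n x, F HA n x -> F HB n (phi x)) ->
  forall x y, grmap HA HB phi (x * y) = grmap HA HB phi x * grmap HA HB phi y.
Proof.
move=> lphi mphi mon.
have Hh : forall i j u v, GA i u -> GA j v ->
    grmap HA HB phi (u * v) = grmap HA HB phi u * grmap HA HB phi v.
  move=> i j u v Gu Gv; rewrite (gr_hom HA HB lphi (Gmul HA Gu Gv)) (gr_hom HA HB lphi Gu) (gr_hom HA HB lphi Gv).
  by rewrite mphi pi_mulF //; apply: mon; apply: (GF HA (leqnn _)).
move=> x y; have [N1 H1] := bound_ex HA x; have [N2 H2] := bound_ex HA y.
rewrite {1}(pi_sum H1) {1}(pi_sum H2) (gr_split HB lphi H1) (gr_split HB lphi H2).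
rewrite mulr_suml (gr_big HA HB lphi) mulr_suml; apply: eq_bigr => i _.
rewrite mulr_sumr (gr_big HA HB lphi) mulr_sumr; apply: eq_bigr => j _.
by apply: Hh; apply: piG.
Qed.

Lemma Fmono (k : fieldType) (A : algType k) (G : nat -> A -> Prop) (HG : connected_graded G) m n x :
  (n <= m)%N -> F HG m x -> F HG n x.
Proof. by move=> nm Fx i iN; apply: Fx; apply: leq_trans nm. Qed.

Lemma mon_lemma (k : fieldType) (A B : algType k) (GA : nat -> A -> Prop) (GB : nat -> B -> Prop)
  (HA : connected_graded GA) (HB : connected_graded GB) (genA : generated_in_deg1 GA)
  (phi : A -> B) :
  (forall (a : k) x y, phi (a *: x + y) = a *: phi x + phi y) ->
  (forall x y, phi (x * y) = phi x * phi y) ->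
  (forall x, F HA 1 x -> F HB 1 (phi x)) ->
  forall n x, F HA n x -> F HB n (phi x).
Proof.
move=> lphi mphi H1.
have sF := Fsub HB.
have F0B : forall m, F HB m (phi 0) by move=> m; rewrite (l0 lphi); apply: sub0 (sF m).
have Hom : forall x m, F HB m (phi (pi HA x m)).
  apply: genA.
  - move=> m; rewrite pi_one; case: eqP => [->|_] //.
  - move=> a x y Hx Hy m; rewrite pi_lin lphi.
    by case: (sF m) => _; apply.
  - move=> x y Hx Hy m.
    have [N1 B1] := bound_ex HA x; have [N2 B2] := bound_ex HA y.
    set N := maxn N1 N2.
    have C1 : forall i, (N <= i)%N -> pi HA x i = 0.
      by move=> i; rewrite geq_max => /andP[/B1].
    have C2 : forall i, (N <= i)%N -> pi HA y i = 0.
      by move=> i; rewrite geq_max => /andP[_ /B2].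
    rewrite (pi_mul m C1 C2) (lsum lphi); apply: sub_sum => [|i _] //.
    rewrite (lsum lphi); apply: sub_sum => [|j _] //.
    case: eqP => [<-|_] //; rewrite mphi; exact: Fmul.
  - move=> x Gx m; rewrite (pi_hom HA Gx); case: eqP => [->|_] //.
    by apply: H1; apply: (GF HA (leqnn 1) Gx).
move=> n x Fx; have [N HN] := bound_ex HA x.
rewrite (pi_sum HN) (lsum lphi); apply: sub_sum => [|i _] //.
case: (ltnP i n) => iN; first by rewrite Fx.
exact: (Fmono iN).
Qed.

Lemma wl (d : nat) (j : 'I_d) : widen_ord (leqnSn d) j = lift ord_max j.
Proof. by apply: val_inj => /=; rewrite /bump leqNgt ltn_ord. Qed.
Lemma unlift_w (d : nat) (j : 'I_d) : unlift ord_max (widen_ord (leqnSn d) j) = Some j.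
Proof. by rewrite wl liftK. Qed.

Lemma span_fin (k : fieldType) (A : algType k) (G : nat -> A -> Prop)
  (HG : connected_graded G) (gen : generated_in_deg1 G) (J : A -> Prop) d (b : 'I_d -> A) :
  two_sided_ideal J -> (forall x, exists c, J (x - c *: 1)) -> (forall c, J (c *: 1) -> c = 0) ->
  (forall x, G 1 x -> exists a : 'I_d -> k, x = \sum_i a i *: b i) ->
  exists v : 'I_d -> A, (forall i, J (v i)) /\
    forall x, J x -> exists a : 'I_d -> k, ideal_sq J (x - \sum_i a i *: v i).
Proof.
move=> tJ Hs Hi Hb; have sJ := tsi_sub tJ.
pose e i := proj1_sig (constructive_indefinite_description _ (Hs (b i))).
have He i : J (b i - e i *: 1) := proj2_sig (constructive_indefinite_description _ (Hs (b i))).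
exists (fun i => b i - e i *: 1); split => // x Jx.
have [z [e0 [Gz [Jz Sq]]]] := tangent_span HG gen tJ Hs Hi Jx.
have [a Ea] := Hb z Gz; exists a.
have E1 : \sum_i a i *: (b i - e i *: 1) = z - (\sum_i a i * e i) *: 1.
  rewrite Ea scaler_suml -sumrB; apply: eq_bigr => i _; by rewrite scalerBr scalerA.
have Jsum : J (\sum_i a i *: (b i - e i *: 1)) by apply: sub_sum => [|i _] //; apply: (subZ _ sJ).
have : J ((\sum_i a i * e i - e0) *: 1).
  have -> : (\sum_i a i * e i - e0) *: 1 = (z - e0 *: 1) - \sum_i a i *: (b i - e i *: 1).
    by rewrite E1 opprB [RHS]addrC subrKA scalerBl.
  exact: subB.
move/Hi/eqP; rewrite subr_eq0 => /eqP Es.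
by rewrite E1 Es.
Qed.

Theorem lemma1p2 (k : fieldType) (A B : algType k)
    (GA : nat -> A -> Prop) (GB : nat -> B -> Prop) (d : nat) :
  connected_graded GA -> connected_graded GB ->
  generated_in_deg1 GA -> generated_in_deg1 GB ->
  sdim (GA 1%N) d ->
  codim1_ideal_tdim (pos_part GA) d ->
  (forall I : A -> Prop, codim1_ideal_tdim I d -> forall x, I x <-> pos_part GA x) ->
  (exists f : A -> B, alg_iso f) ->
  exists f : A -> B, alg_iso f /\ (forall i x, GA i x <-> GB i (f x)).
Proof.
move=> HA HB genA genB sdA tdA uniq [phi [lphi [mphi [phi1 [psi phiK psiK]]]]].
have lpsi := lg lphi phiK psiK; have mpsi := mg mphi phiK psiK.
have psi1 := g1 phi1 phiK psiK.
have [bA [_ [HbA _]]] := sdA.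
have HbA' : forall x, GA 1 x -> exists a : 'I_d -> k, x = \sum_i a i *: bA i.
  by move=> x Gx; have [a Ha] := HbA x Gx; exists a; apply: subr0_eq.
pose I x := F HB 1 (phi x).
have tI : two_sided_ideal I := tr_tsi lphi mphi (F1_ideal HB).
have cI : qdim (fun _ => True) I 1 := tr_qdim lphi psiK (F1_codim HB).
have [HsI HiI] := codim1_spec tI cI.
have [vI [JvI HvI]] := span_fin HA genA tI HsI HiI HbA'.
pose J y := pos_part GA (psi y).
have tdJ : codim1_ideal_tdim J d := tr_codim lpsi mpsi psiK phiK tdA.
have [tJ [cJ [u [Ju [_ HuI]]]]] := tdJ.
have sJ := tsi_sub tJ; have sqJ := sq_sub sJ.
have [HsJ HiJ] := codim1_spec tJ cJ.
have Hz i : exists z e, GB 1 z /\ J (z - e *: 1) /\ ideal_sq J (u i - (z - e *: 1)).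
  exact: (tangent_span HB genB tJ HsJ HiJ (Ju i)).
pose z i := proj1_sig (constructive_indefinite_description _ (Hz i)).
have Hz' i : exists e, GB 1 (z i) /\ J (z i - e *: 1) /\ ideal_sq J (u i - (z i - e *: 1))
  := proj2_sig (constructive_indefinite_description _ (Hz i)).
pose e i := proj1_sig (constructive_indefinite_description _ (Hz' i)).
have He i : GB 1 (z i) /\ J (z i - e i *: 1) /\ ideal_sq J (u i - (z i - e i *: 1))
  := proj2_sig (constructive_indefinite_description _ (Hz' i)).
have zind : forall c : 'I_d -> k, \sum_i c i *: z i = 0 -> forall i, c i = 0.
  move=> c Hc; apply: HuI.
  have Et : \sum_i c i *: (z i - e i *: 1) = - ((\sum_i c i * e i) *: 1).
    have -> : \sum_i c i *: (z i - e i *: 1) = \sum_i c i *: z i - (\sum_i c i * e i) *: 1.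
      by rewrite scaler_suml -sumrB; apply: eq_bigr => i _; rewrite scalerBr scalerA.
    by rewrite Hc sub0r.
  have Jt : J (\sum_i c i *: (z i - e i *: 1)).
    by apply: (sub_sum _ sJ) => i _; apply: (subZ _ sJ); case: (He i) => _ [].
  have s0 : \sum_i c i * e i = 0.
    by apply: HiJ; rewrite Et in Jt; have := subN sJ Jt; rewrite opprK.
  have -> : \sum_i c i *: u i = \sum_i c i *: (u i - (z i - e i *: 1)) + \sum_i c i *: (z i - e i *: 1).
    by rewrite -big_split; apply: eq_bigr => i _ /=; rewrite -scalerDr subrK.
  rewrite Et s0 scale0r oppr0 addr0.
  by apply: (sub_sum _ sqJ) => i _; apply: (subZ _ sqJ); case: (He i) => _ [].
have zspan : forall y, GB 1 y -> exists a : 'I_d -> k, y = \sum_i a i *: z i.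
  move=> y Gy.
  pose t (j : 'I_d.+1) : B := oapp z y (unlift ord_max j).
  have Gt j : GB 1 (t j).
    by rewrite /t; case: (unlift ord_max j) => [j'|] //=; case: (He j').
  have Pt j : I (psi (t j)).
    by rewrite /I psiK; apply: (GF HB (leqnn 1)).
  have [a [[j0 aj0] Sq]] := core (sq_sub (tsi_sub tI)) Pt HvI (ltnSn d).
  move/(tr_sq lphi mphi phiK psiK): Sq; rewrite (lsum lphi).
  under eq_bigr => j _ do rewrite (lZ lphi) psiK.
  move=> /sq_F2 F2.
  have G1s : GB 1 (\sum_j a j *: t j).
    by apply: (sub_sum _ (Gsub HB 1)) => j _; apply: (subZ _ (Gsub HB 1)).
  have S0 : \sum_j a j *: t j = 0.
    by rewrite -(pi_homm HB G1s); apply: F2.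
  move: S0; rewrite big_ord_recr /=.
  under eq_bigr => j _ do rewrite /t unlift_w /=.
  rewrite /t unlift_none /=.
  have [am0|amn0] := eqVneq (a ord_max) 0.
    rewrite am0 scale0r addr0 => /zind H0; exfalso; move: aj0.
    case: (unliftP ord_max j0) => [j'|] ->; last by rewrite am0 eqxx.
    by rewrite -wl H0 eqxx.
  move=> S0; exists (fun j => - (a ord_max)^-1 * a (widen_ord (leqnSn d) j)).
  have Ey : a ord_max *: y = - \sum_j a (widen_ord (leqnSn d) j) *: z j.
    by apply/eqP; rewrite -addr_eq0 addrC S0.
  have -> : y = (a ord_max)^-1 *: (a ord_max *: y) by rewrite scalerA mulVf // scale1r.
  rewrite Ey scalerN -scaleNr.
  by rewrite scaler_sumr; apply: eq_bigr => j _; rewrite scalerA.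
have tdB : codim1_ideal_tdim (F HB 1) d.
  have tF := F1_ideal HB; have cF := F1_codim HB.
  split => //; split => //.
  have Gz i : GB 1 (z i) by case: (He i).
  exists z; split; first by move=> i; apply: (GF HB (leqnn 1)).
  split.
    move=> x Fx; have [HsF HiF] := codim1_spec tF cF.
    have [z' [e' [Gz' [Fz' Sq]]]] := tangent_span HB genB tF HsF HiF Fx.
    have e0 : e' = 0.
      apply: HiF; have -> : e' *: 1 = z' - (z' - e' *: 1) by rewrite opprB addrC subrK.
      by apply: (subB (Fsub HB 1)) => //; apply: (GF HB (leqnn 1)).
    have [a Ea] := zspan z' Gz'; exists a; rewrite -Ea.
    by move: Sq; rewrite e0 scale0r subr0.
  move=> c /sq_F2 F2; apply: zind.
  have G1s : GB 1 (\sum_j c j *: z j).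
    by apply: (sub_sum _ (Gsub HB 1)) => j _; apply: (subZ _ (Gsub HB 1)).
  by rewrite -(pi_homm HB G1s); apply: F2.
have EI : forall x, F HB 1 (phi x) <-> F HA 1 x.
  move=> x; have U := uniq I (tr_codim lphi mphi phiK psiK tdB) x; have P := pos_partE HA x; tauto.
have monA := mon_lemma (HA:=HA) (HB:=HB) genA lphi mphi (fun x => (EI x).2).
have monB := mon_lemma (HA:=HB) (HB:=HA) genB lpsi mpsi
  (fun y Fy => (EI (psi y)).1 (eq_ind_r (F HB 1) Fy (psiK y))).
exists (grmap HA HB phi); split.
  split; first exact: gr_lin.
  split; first exact: gr_mul.
  split; first exact: gr_one.
  by exists (grmap HB HA psi); apply: gr_cancel.
move=> i x; split.
  by move=> Gx; rewrite (gr_hom HA HB lphi Gx); apply: piG.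
move=> Gy; rewrite -(gr_cancel lphi lpsi phiK monA monB x) (gr_hom HB HA lpsi Gy).
exact: piG.
Qed.
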